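(* Let $A$ be a vector bundle over $M$, $P\in\Gamma(A^\vee\otimes A)$ any $(1,1)$-form, and $X$ a vector field of degree $b-1$ on $A[1]$. Then the map $\Phi(X):\Gamma(A)^{\times b}\to\Gamma(A)$, $\Phi(X)(E_1,\dots,E_b)=\sum_{k=0}^b\sum_{1\le i_1<\dots<i_k\le b}(-1)^{b-k}P^{b-k}B_X(E_1,\dots,PE_{i_1},\dots,PE_{i_k},\dots,E_b)$ ($P$ applied exactly in positions $i_1,\dots,i_k$) is alternating and $C^\infty(M)$-multilinear, i.e. $\Phi(X)\in\Gamma(\wedge^bA^\vee\otimes A)$.
   Context: $A[1]$ is the graded manifold with function algebra $\Gamma(\wedge^\bullet A^\vee)$; a vector field of degree $d$ on $A[1]$ is a graded derivation of degree $d$ of $\Gamma(\wedge^\bullet A^\vee)$. For $X$ of degree $b-1$, $a_X:C^\infty(M)\to\Gamma(\wedge^{b-1}A^\vee)$ and $\partial_X:\Gamma(A^\vee)\to\Gamma(\wedge^bA^\vee)$ are the restrictions of $X$. With $\langle\eta,X_1\wedge\cdots\wedge X_p\rangle=\eta(X_1,\dots,X_p)$, $B_X:\Gamma(A)^{\times b}\to\Gamma(A)$ is defined by $\langle W,B_X(E_1,\dots,E_b)\rangle=(-1)^{b-1}\big(\langle\partial_XW,E_1\wedge\cdots\wedge E_b\rangle-\sum_{i=1}^b(-1)^{b-i}\langle a_X\langle W,E_i\rangle,E_1\wedge\cdots\wedge\widehat{E_i}\wedge\cdots\wedge E_b\rangle\big)$ for all $W\in\Gamma(A^\vee)$. $P$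 is viewed as a $C^\infty(M)$-linear endomorphism of $\Gamma(A)$. *)

(* Defs.v *)
(* Algebraic model of the setting:
   R  ~ C^oo(M)  (a commutative ring),
   V  ~ Gamma(A) (an R-module),
   a p-form (element of Gamma(wedge^p A^vee)) is an R-multilinear alternating
   map V^p -> R, encoded as a function  f : seq V -> R  vanishing on sequences
   of length <> p.  The function algebra of A[1] is the direct sum of these. *)
From HB Require Import structures.
From mathcomp Require Import all_boot all_order all_algebra.
Set Implicit Arguments. Unset Strict Implicit. Unset Printing Implicit Defensive.
Import Order.TTheory GRing.Theory.
Local Open Scope ring_scope.

Section Forms.
Variables (R : comNzRingType) (V : lmodType R).

Definition fn := seq V -> R.

(* homogeneous of (integer) degree p: vanishes off sequences of length p;
   for p < 0 this forces f = 0 *)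
Definition homog (p : int) (f : fn) : Prop :=
  forall s : seq V, (size s)%:Z != p -> f s = 0.

Definition multilinear (f : fn) : Prop :=
  forall (s : seq V) (i : nat) (a : R) (u v : V), (i < size s)%N ->
    f (set_nth 0 s i (a *: u + v)) = a * f (set_nth 0 s i u) + f (set_nth 0 s i v).

Definition alternating (f : fn) : Prop :=
  forall (s : seq V) (i j : nat), (i < j)%N -> (j < size s)%N ->
    nth 0 s i = nth 0 s j -> f s = 0.

Definition is_form (p : int) (f : fn) : Prop :=
  [/\ homog p f, multilinear f & alternating f].

(* sign of the shuffle selecting the positions in S first *)
Definition shuffle_sign n (S : {set 'I_n}) : R :=
  (-1) ^+ #|[set ij : 'I_n * 'I_n | (ij.1 \in S) && (ij.2 \notin S) && (ij.2 < ij.1)%N]|.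

Definition wedge (f g : fn) : fn := fun s =>
  \sum_(S : {set 'I_(size s)})
     shuffle_sign S * f (mask [seq i \in S | i <- enum 'I_(size s)] s)
                    * g (mask [seq i \notin S | i <- enum 'I_(size s)] s).

Definition const0 (c : R) : fn := fun s => if s is [::] then c else 0.

(* D : vector field of degree b-1 on A[1], i.e. a graded derivation of degree
   b-1 of Gamma(wedge^. A^vee) (given on homogeneous elements). *)
Definition is_vector_field (b : nat) (D : fn -> fn) : Prop :=
  [/\ (forall (p : nat) f, is_form p%:Z f -> is_form (p%:Z + (b%:Z - 1)) (D f)),
      (forall (p : nat) f g, is_form p%:Z f -> is_form p%:Z g ->
          forall s, D (fun t => f t + g t) s = D f s + D g s) &
      (forall (p q : nat) f g, is_form p%:Z f -> is_form q%:Z g ->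
          forall s, D (wedge f g) s
            = wedge (D f) g s + (-1) ^+ (b.+1 * p) * wedge f (D g) s)].
      (* (-1)^((b-1)p) = (-1)^((b+1)p) *)

Definition aX (D : fn -> fn) (c : R) : fn := D (const0 c).
Definition dX (D : fn -> fn) (W : fn) : fn := D W.

Definition tup b (E : 'I_b -> V) : seq V := [seq E i | i <- enum 'I_b].
Definition tup_del b (E : 'I_b -> V) (i : 'I_b) : seq V :=
  [seq E j | j <- enum 'I_b & j != i].

(* B is B_X: defined by its pairings with all W in Gamma(A^vee) *)
Definition is_BX (b : nat) (D : fn -> fn) (B : ('I_b -> V) -> V) : Prop :=
  forall (W : fn), is_form 1 W -> forall E : 'I_b -> V,
    W [:: B E] = (-1) ^+ b.+1 *
      (dX D W (tup E)
       - \sum_(i < b) (-1) ^+ (b - i.+1) * aX D (W [:: E i]) (tup_del E i)).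

(* sections of A are separated by sections of A^vee (true for vector bundles) *)
Definition dual_separates : Prop :=
  forall v : V, (forall W : fn, is_form 1 W -> W [:: v] = 0) -> v = 0.

Definition upd b (E : 'I_b -> V) (i : 'I_b) (x : V) : 'I_b -> V :=
  fun j => if j == i then x else E j.

Definition Phi (b : nat) (P : V -> V) (B : ('I_b -> V) -> V) (E : 'I_b -> V) : V :=
  \sum_(S : {set 'I_b})
     (-1) ^+ (b - #|S|) *: iter (b - #|S|) P (B (fun i => if i \in S then P (E i) else E i)).

Definition vmultilinear b (T : ('I_b -> V) -> V) : Prop :=
  forall E i (a : R) u v, T (upd E i (a *: u + v)) = a *: T (upd E i u) + T (upd E i v).
Definition valternating b (T : ('I_b -> V) -> V) : Prop :=
  forall E (i j : 'I_b), i != j -> E i = E j -> T E = 0.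

End Forms.

(* Main.v *)
Require Import Defs.
From mathcomp Require Import all_boot all_order all_algebra all_fingroup.
From mathcomp Require Import ring zify.
From Stdlib Require Import FunctionalExtensionality.
Set Implicit Arguments. Unset Strict Implicit. Unset Printing Implicit Defensive.
Import Order.TTheory GRing.Theory.
Local Open Scope ring_scope.

Lemma set_nth_cat0 (R : comNzRingType) (V : lmodType R) (s1 t : seq V) (w u : V) :
  set_nth 0 s1 (size s1) u = s1 -> True.
Proof. by []. Qed.

Lemma set_nth_catw (R : comNzRingType) (V : lmodType R) (s1 t : seq V) (w u : V) :
  set_nth 0 (s1 ++ w :: t) (size s1) u = s1 ++ u :: t.
Proof. by elim: s1 => //= x s1 ->. Qed.

Lemma ml_lin (R : comNzRingType) (V : lmodType R) (f : fn V) s1 t a (u v : V) :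
  multilinear f ->
  f (s1 ++ (a *: u + v) :: t) = a * f (s1 ++ u :: t) + f (s1 ++ v :: t).
Proof.
move=> Hf; have := Hf (s1 ++ 0 :: t) (size s1) a u v.
rewrite size_cat /= addnS ltnS leq_addr => /(_ isT).
by rewrite !set_nth_catw.
Qed.

Lemma ml_add (R : comNzRingType) (V : lmodType R) (f : fn V) s1 t (u v : V) :
  multilinear f -> f (s1 ++ (u + v) :: t) = f (s1 ++ u :: t) + f (s1 ++ v :: t).
Proof. by move=> Hf; have := ml_lin s1 t 1 u v Hf; rewrite scale1r mul1r. Qed.

Lemma alt_swap (R : comNzRingType) (V : lmodType R) (f : fn V) s1 t (x y : V) :
  multilinear f -> alternating f ->
  f (s1 ++ x :: y :: t) = - f (s1 ++ y :: x :: t).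
Proof.
move=> Hm Ha.
have g0 : forall u, f (s1 ++ u :: u :: t) = 0.
  move=> u; apply: (Ha _ (size s1) (size s1).+1) => //.
    by rewrite size_cat /=; lia.
  by rewrite !nth_cat ltnn subnn ltnNge leqnSn /= subSnn.
have addr : forall u v w, f (s1 ++ u :: (v + w) :: t)
    = f (s1 ++ u :: v :: t) + f (s1 ++ u :: w :: t).
  by move=> u v w; rewrite -!(cat_rcons u s1) (ml_add (f:=f)).
have := g0 (x + y); rewrite (ml_add (f:=f)) // !addr !g0 add0r addr0 => /eqP.
by rewrite addr_eq0 => /eqP.
Qed.

Lemma alt_move (R : comNzRingType) (V : lmodType R) (f : fn V) s1 s2 s3 (x : V) :
  multilinear f -> alternating f ->
  f (s1 ++ x :: s2 ++ s3) = (-1) ^+ size s2 * f (s1 ++ s2 ++ x :: s3).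
Proof.
move=> Hm Ha; elim: s2 s1 => [|y s2 IH] s1 /=; first by rewrite expr0 mul1r.
rewrite alt_swap // -cat_rcons IH cat_rcons exprS mulN1r mulNr.
by [].
Qed.

Lemma alt_map_eq (R : comNzRingType) (V : lmodType R) (f : fn V) b (E : 'I_b -> V)
  (L : seq 'I_b) i j : alternating f -> uniq L -> i \in L -> j \in L -> i != j ->
  E i = E j -> f (map E L) = 0.
Proof.
move=> Ha uL iL jL ij Eij.
wlog lt : i j iL jL ij Eij / (index i L < index j L)%N.
  move=> H; case: (ltngtP (index i L) (index j L)) => h.
  - exact: (H i j).
  - by apply: (H j i) => //; rewrite eq_sym.
  - by move: ij; rewrite (index_inj i iL jL h) eqxx.
apply: (Ha _ (index i L) (index j L)) => //; first by rewrite size_map index_mem.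
by rewrite !(nth_map i) ?index_mem // !nth_index.
Qed.

Lemma upd_map_notin (R : comNzRingType) (V : lmodType R) b (F : 'I_b -> V) i
  (L : seq 'I_b) z : i \notin L -> map (upd F i z) L = map F L.
Proof.
move=> iL; apply/eq_in_map => k kL; rewrite /upd; case: eqP => // ki.
by rewrite -ki kL in iL.
Qed.

Lemma upd_map_split (R : comNzRingType) (V : lmodType R) b (F : 'I_b -> V) i
  (L : seq 'I_b) : uniq L -> i \in L ->
  exists s1 s2, forall z, map (upd F i z) L = s1 ++ z :: s2.
Proof.
move=> uL iL; case/splitPr: iL uL => L1 L2.
rewrite cat_uniq /= => /and3P [_ /norP [iL1 _] /andP [iL2 _]].
exists (map F L1), (map F L2) => z.
by rewrite map_cat /= !upd_map_notin // /upd eqxx.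
Qed.

Lemma filter_del b (L1 L2 : seq 'I_b) i : i \notin L1 -> i \notin L2 ->
  [seq k <- L1 ++ i :: L2 | k != i] = L1 ++ L2.
Proof.
move=> h1 h2; rewrite filter_cat /= eqxx /=.
congr (_ ++ _); apply/all_filterP/allP => k kL; apply/eqP => ki.
  by rewrite -ki kL in h1.
by rewrite -ki kL in h2.
Qed.

Lemma split2 (T : eqType) (L : seq T) i j : uniq L -> i \in L -> j \in L ->
  (index i L < index j L)%N ->
  exists L1 L2 L3, L = L1 ++ i :: L2 ++ j :: L3 /\
     size L2 = (index j L - (index i L).+1)%N.
Proof.
move=> uL iL; case/splitPr: iL uL => L1 R1 uL jL lt.
have := uL; rewrite cat_uniq /= => /and3P [_ /norP [iL1 _] /andP [iR1 uR1]].
have jL1 : j \notin L1.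
  apply/negP => jL1; move: lt; rewrite !index_cat jL1 (negbTE iL1) /= eqxx.
  by rewrite addn0 ltnNge ltnW // index_mem.
have ji : i != j.
  by apply/eqP => ij; move: lt; rewrite -ij ltnn.
have jR1 : j \in R1.
  by move: jL; rewrite mem_cat (negbTE jL1) /= inE eq_sym (negbTE ji).
rewrite !index_cat (negbTE jL1) (negbTE iL1) /= eqxx (negbTE ji) addn0.
move: uR1 iR1; case/splitPr: jR1 => L2 L3 uR1 iR1.
have := uR1; rewrite cat_uniq /= => /and3P [_ /norP [jL2 _] _].
exists L1, L2, L3; split => //.
rewrite index_cat (negbTE jL2) /= eqxx addn0; lia.
Qed.

Lemma map_enum_const n (p : pred 'I_n) (x : bool) : (forall i, p i = x) ->
  [seq p i | i <- enum 'I_n] = nseq n x.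
Proof.
move=> h; rewrite (@eq_map _ _ p (fun=> x)) //.
have mc : forall (T : Type) (l : seq T), map (fun=> x) l = nseq (size l) x.
  by move=> T; elim=> //= y l ->.
by rewrite mc size_enum_ord.
Qed.

Lemma const0_mask (R : comNzRingType) (V : lmodType R) n (s : seq V)
   (p : pred 'I_n) k c : size s = n -> p k ->
  const0 c (mask [seq p i | i <- enum 'I_n] s) = 0.
Proof.
move=> sz pk.
have : mask [seq p i | i <- enum 'I_n] s != [::].
  rewrite -size_eq0 size_mask; last by rewrite size_map size_enum_ord.
  rewrite -lt0n -has_count; apply/hasP; exists true => //.
  by apply/mapP; exists k; rewrite ?mem_enum.
by case: (mask _ s).
Qed.

Lemma wedge_r0 (R : comNzRingType) (V : lmodType R) (f : fn V) c (s : seq V) :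
  wedge f (const0 c) s = f s * c.
Proof.
rewrite /wedge (bigD1 setT) //= big1 ?addr0.
  rewrite (map_enum_const (p := fun i => i \in setT) (x := true)); last by move=> i; rewrite inE.
  rewrite (map_enum_const (p := fun i => i \notin setT) (x := false)); last by move=> i; rewrite inE.
  rewrite mask_true ?size_enum_ord // mask_false /=.
  rewrite /shuffle_sign (_ : #|_| = 0%N) ?expr0 ?mul1r //.
  by apply: eq_card0 => ij; rewrite !inE andbF.
move=> S SnT.
have [k kS] : exists k, k \notin S.
  apply/existsP; apply: contraR SnT => /existsPn h; apply/eqP/setP => k.
  by rewrite inE; apply/negPn; exact: h.
by rewrite (const0_mask (p := fun i => i \notin S) _ (k := k)) ?mulr0.
Qed.

Lemma wedge_l0 (R : comNzRingType) (V : lmodType R) (f : fn V) c (s : seq V) :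
  wedge (const0 c) f s = c * f s.
Proof.
rewrite /wedge (bigD1 set0) //= big1 ?addr0.
  rewrite (map_enum_const (p := fun i => i \in set0) (x := false)); last by move=> i; rewrite inE.
  rewrite (map_enum_const (p := fun i => i \notin set0) (x := true)); last by move=> i; rewrite inE.
  rewrite mask_true ?size_enum_ord // mask_false /=.
  rewrite /shuffle_sign (_ : #|_| = 0%N) ?expr0 ?mul1r //.
  by apply: eq_card0 => ij; rewrite !inE.
move=> S Sn0.
have [k kS] : exists k, k \in S by apply/set0Pn.
by rewrite (const0_mask (p := fun i => i \in S) _ (k := k)) ?mulr0 ?mul0r.
Qed.

Lemma const0_form (R : comNzRingType) (V : lmodType R) (c : R) :
  is_form (Posz 0) (@const0 R V c).
Proof.
split.
- by case.
- by move=> [|x s] [|i] a u v //= _; rewrite mulr0 addr0.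
- by move=> [|x s] i j.
Qed.

Lemma aX_add (R : comNzRingType) (V : lmodType R) b (D : fn V -> fn V)
  (HX : is_vector_field b D) p q s : aX D (p + q) s = aX D p s + aX D q s.
Proof.
rewrite /aX.
have -> : @const0 R V (p + q) = fun t => const0 p t + const0 q t.
  by apply: functional_extensionality => -[|x t] //=; rewrite addr0.
by case: HX => _ H2 _; apply: (H2 0%N); apply: const0_form.
Qed.

Lemma aX_mul (R : comNzRingType) (V : lmodType R) b (D : fn V -> fn V)
  (HX : is_vector_field b D) a p s : aX D (a * p) s = aX D a s * p + a * aX D p s.
Proof.
rewrite /aX.
have -> : @const0 R V (a * p) = wedge (const0 a) (const0 p).
  by apply: functional_extensionality => t; rewrite wedge_r0; case: t => //= *; rewrite mul0r.
case: HX => _ _ H3; rewrite /aX (H3 0%N 0%N) ?muln0 ?expr0 ?mul1r ?wedge_r0 ?wedge_l0 //;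
  exact: const0_form.
Qed.

Lemma aX_1 (R : comNzRingType) (V : lmodType R) b (D : fn V -> fn V)
  (HX : is_vector_field b D) s : aX D 1 s = 0.
Proof.
have := aX_mul HX 1 1 s; rewrite !mulr1 mul1r => /esym /eqP.
by rewrite -subr_eq0 addrK => /eqP.
Qed.

Lemma W0 (R : comNzRingType) (V : lmodType R) (W : fn V) : is_form 1 W -> W [:: 0] = 0.
Proof.
case=> _ Hm _; have := Hm [:: 0] 0%N 1 0 0 isT; rewrite /= scale1r addr0 mul1r => /esym /eqP.
by rewrite -subr_eq0 addrK => /eqP.
Qed.

Lemma Wlin (R : comNzRingType) (V : lmodType R) (W : fn V) a (u v : V) :
  is_form 1 W -> W [:: a *: u + v] = a * W [:: u] + W [:: v].
Proof. by case=> _ Hm _; have := Hm [:: 0] 0%N a u v isT. Qed.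

Lemma WD (R : comNzRingType) (V : lmodType R) (W : fn V) (u v : V) :
  is_form 1 W -> W [:: u + v] = W [:: u] + W [:: v].
Proof. by move=> HW; have := Wlin 1 u v HW; rewrite scale1r mul1r. Qed.

Lemma WZ (R : comNzRingType) (V : lmodType R) (W : fn V) a (u : V) :
  is_form 1 W -> W [:: a *: u] = a * W [:: u].
Proof. by move=> HW; have := Wlin a u 0 HW; rewrite !addr0 (W0 HW) addr0. Qed.

Lemma sep_eq (R : comNzRingType) (V : lmodType R) (Hsep : dual_separates V) (x y : V) :
  (forall W : fn V, is_form 1 W -> W [:: x] = W [:: y]) -> x = y.
Proof.
move=> h; apply/eqP; rewrite -subr_eq0; apply/eqP; apply: Hsep => W HW.
by rewrite -scaleN1r addrC Wlin // (h W HW) mulN1r addNr.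
Qed.

Lemma upd_eq (R : comNzRingType) (V : lmodType R) b (E : 'I_b -> V) i z :
  upd E i z i = z.
Proof. by rewrite /upd eqxx. Qed.

Lemma upd_neq (R : comNzRingType) (V : lmodType R) b (E : 'I_b -> V) i k z :
  k != i -> upd E i z k = E k.
Proof. by rewrite /upd => /negbTE ->. Qed.

Lemma tup_del_upd (R : comNzRingType) (V : lmodType R) b (E : 'I_b -> V) i z :
  tup_del (upd E i z) i = tup_del E i.
Proof. by rewrite /tup_del upd_map_notin // mem_filter eqxx. Qed.

Lemma B_lin (R : comNzRingType) (V : lmodType R) (Hsep : dual_separates V) b
  (D : fn V -> fn V) (HX : is_vector_field b D) (B : ('I_b -> V) -> V)
  (HB : is_BX D B) (E : 'I_b -> V) i a x y :
  B (upd E i (a *: x + y)) = a *: B (upd E i x) + B (upd E i y)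
     + (- ((-1) ^+ b.+1 * (-1) ^+ (b - i.+1) * aX D a (tup_del E i))) *: x.
Proof.
apply: sep_eq => // W HW.
rewrite !WD // !WZ // !HB //.
have [HX1 _ _] := HX.
have [_ mDW _] := HX1 1%N W HW.
have [s1 [s2 Hs]] := upd_map_split E (enum_uniq 'I_b) (mem_enum _ i).
rewrite /dX /tup !Hs ml_lin //.
set C := (-1) ^+ (b - i.+1) * aX D a (tup_del E i) * W [:: x].
have claim : forall k : 'I_b,
  (-1) ^+ (b - k.+1) * aX D (W [:: upd E i (a *: x + y) k]) (tup_del (upd E i (a *: x + y)) k)
  = a * ((-1) ^+ (b - k.+1) * aX D (W [:: upd E i x k]) (tup_del (upd E i x) k))
    + (-1) ^+ (b - k.+1) * aX D (W [:: upd E i y k]) (tup_del (upd E i y) k)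
    + (if k == i then C else 0).
  move=> k; case: (eqVneq k i) => [-> | ki].
    rewrite !upd_eq !tup_del_upd Wlin // (aX_add HX) (aX_mul HX) /C; ring.
  rewrite !upd_neq //.
  have [_ mh _] := HX1 0%N _ (@const0_form R V (W [:: E k])).
  have iL : i \in [seq j <- enum 'I_b | j != k] by rewrite mem_filter eq_sym ki mem_enum.
  have [t1 [t2 Ht]] := upd_map_split E (filter_uniq (fun j => j != k) (enum_uniq 'I_b)) iL.
  by rewrite /tup_del !Ht ml_lin //; ring.
rewrite (eq_bigr _ (fun k _ => claim k)) !big_split /= -mulr_sumr -big_mkcond big_pred1_eq.
rewrite /C; ring.
Qed.

Lemma B_add (R : comNzRingType) (V : lmodType R) (Hsep : dual_separates V) b
  (D : fn V -> fn V) (HX : is_vector_field b D) (B : ('I_b -> V) -> V)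
  (HB : is_BX D B) (E : 'I_b -> V) i x y :
  B (upd E i (x + y)) = B (upd E i x) + B (upd E i y).
Proof.
have := B_lin Hsep HX HB E i 1 x y.
by rewrite (aX_1 HX) !scale1r mulr0 oppr0 scale0r addr0.
Qed.

Lemma B_alt (R : comNzRingType) (V : lmodType R) (Hsep : dual_separates V) b
  (D : fn V -> fn V) (HX : is_vector_field b D) (B : ('I_b -> V) -> V)
  (HB : is_BX D B) (E : 'I_b -> V) i j :
  i != j -> E i = E j -> B E = 0.
Proof.
wlog lt : i j / (i < j)%N.
  move=> H ij Eij; case: (ltngtP i j) => h.
  - exact: (H i j).
  - by apply: (H j i) => //; rewrite eq_sym.
  - by move: ij; rewrite (val_inj h) eqxx.
move=> ij Eij.
apply: sep_eq => // W HW.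
rewrite (W0 HW) (HB _ HW).
have [HX1 _ _] := HX.
have [_ _ aDW] := HX1 1%N W HW.
rewrite /dX /tup (alt_map_eq aDW (enum_uniq _) (mem_enum _ i) (mem_enum _ j) ij Eij).
rewrite (bigD1 i) //= (bigD1 j) /=; last by rewrite eq_sym.
rewrite big1 => [|k /andP [ki kj]]; last first.
  have [_ _ ah] := HX1 0%N _ (@const0_form R V (W [:: E k])).
  rewrite (_ : aX D (W [:: E k]) (tup_del E k) = 0) ?mulr0 //.
  apply: (alt_map_eq ah (filter_uniq _ (enum_uniq _)) _ _ ij Eij).
    by rewrite mem_filter eq_sym ki mem_enum.
  by rewrite mem_filter eq_sym kj mem_enum.
have lt' : (index i (enum 'I_b) < index j (enum 'I_b))%N by rewrite !index_enum_ord.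
have [L1 [L2 [L3 [He Hsz]]]] :=
  split2 (enum_uniq 'I_b) (mem_enum _ i) (mem_enum _ j) lt'.
rewrite !index_enum_ord in Hsz.
have u := enum_uniq 'I_b; rewrite He in u.
move: u; rewrite cat_uniq cons_uniq => /and3P [_ hL1 /andP [iR u3]]. move/hasPn: hL1 => hL1.
have iL1 : i \notin L1 by apply: hL1; rewrite inE eqxx.
have jL1 : j \notin L1 by apply: hL1; rewrite !(inE, mem_cat) eqxx !orbT.
move: iR; rewrite mem_cat inE negb_or => /andP [iL2 /norP [_ iL3]].
move: u3; rewrite cat_uniq /= => /and3P [_ /norP [jL2 _] /andP [jL3 _]].
have tdi : tup_del E i = map E L1 ++ map E L2 ++ E i :: map E L3.
  rewrite /tup_del He filter_del ?map_cat /= -?Eij //.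
  by rewrite mem_cat inE negb_or iL2 /= negb_or ij iL3.
have tdj : tup_del E j = map E L1 ++ E i :: map E L2 ++ map E L3.
  rewrite /tup_del He (_ : L1 ++ i :: L2 ++ j :: L3 = (L1 ++ i :: L2) ++ j :: L3);
    last by rewrite -catA.
  rewrite filter_del ?map_cat /= -?catA //.
  by rewrite mem_cat inE negb_or jL1 /= negb_or eq_sym ij jL2.
have [_ mh ah] := HX1 0%N _ (@const0_form R V (W [:: E i])).
rewrite -Eij tdj alt_move // size_map Hsz -tdi.
have sg : (-1) ^+ (b - i.+1) = - ((-1) ^+ (b - j.+1) * (-1) ^+ (j - i.+1)) :> R.
  rewrite -exprD (_ : (b - i.+1 = (b - j.+1 + (j - i.+1)).+1)%N) ?exprS ?mulN1r //.
  have := ltn_ord j; lia.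
rewrite sg; ring.
Qed.

Lemma upd_comm (R : comNzRingType) (V : lmodType R) b (F : 'I_b -> V) i j u v :
  i != j -> upd (upd F i u) j v = upd (upd F j v) i u.
Proof.
move=> ij; apply: functional_extensionality => k; rewrite /upd.
case: (eqVneq k j) => [kj|kj]; case: (eqVneq k i) => [ki|ki] //.
by move: ij; rewrite -kj -ki eqxx.
Qed.

Lemma B_swap (R : comNzRingType) (V : lmodType R) (Hsep : dual_separates V) b
  (D : fn V -> fn V) (HX : is_vector_field b D) (B : ('I_b -> V) -> V)
  (HB : is_BX D B) (F : 'I_b -> V) i j :
  i != j -> B (fun k => F (tperm i j k)) = - B F.
Proof.
move=> ij.
pose g u v := B (upd (upd F i u) j v).
have gv : forall u v w, g u (v + w) = g u v + g u w.
  by move=> u v w; rewrite /g (B_add Hsep HX HB).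
have gu : forall u u' v, g (u + u') v = g u v + g u' v.
  by move=> u u' v; rewrite /g !(@upd_comm _ _ _ F i j _ _ ij) (B_add Hsep HX HB).
have g0 : forall u, g u u = 0.
  move=> u; apply: (B_alt Hsep HX HB ij).
  by rewrite upd_eq upd_neq ?upd_eq // eq_sym.
have := g0 (F i + F j); rewrite gu !gv !g0 add0r addr0 => /eqP.
rewrite addr_eq0 => /eqP.
have -> : g (F i) (F j) = B F.
  rewrite /g; congr B; apply: functional_extensionality => k; rewrite /upd.
  by case: (eqVneq k j) => [-> | _] //; case: (eqVneq k i) => [-> | _].
have -> : g (F j) (F i) = B (fun k => F (tperm i j k)).
  rewrite /g; congr B; apply: functional_extensionality => k; rewrite /upd.
  case: tpermP => [-> | -> | /eqP ki /eqP kj]; first by rewrite eqxx (negbTE ij).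
    by rewrite eqxx.
  by rewrite (negbTE ki) (negbTE kj).
by move=> ->; rewrite opprK.
Qed.

Lemma iter_lin (R : comNzRingType) (V : lmodType R) (P : {linear V -> V}) n a (x y : V) :
  iter n P (a *: x + y) = a *: iter n P x + iter n P y.
Proof. by elim: n => //= n ->; rewrite linearP. Qed.

Lemma iter_add (R : comNzRingType) (V : lmodType R) (P : {linear V -> V}) n (x y : V) :
  iter n P (x + y) = iter n P x + iter n P y.
Proof. by have := iter_lin P n 1 x y; rewrite !scale1r. Qed.

Lemma iter0 (R : comNzRingType) (V : lmodType R) (P : {linear V -> V}) n :
  iter n P 0 = 0.
Proof. by elim: n => //= n ->; rewrite linear0. Qed.

Lemma iterZ (R : comNzRingType) (V : lmodType R) (P : {linear V -> V}) n a (x : V) :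
  iter n P (a *: x) = a *: iter n P x.
Proof. by have := iter_lin P n a x 0; rewrite !addr0 iter0 addr0. Qed.

Lemma iterN (R : comNzRingType) (V : lmodType R) (P : {linear V -> V}) n (x : V) :
  iter n P (- x) = - iter n P x.
Proof. by rewrite -scaleN1r iterZ scaleN1r. Qed.

Lemma sum_pair (M : zmodType) n (t : {set 'I_n} -> M) i j :
  (forall S : {set 'I_n}, t (tperm i j @^-1: S) = - t S) ->
  (forall S : {set 'I_n}, (i \in S) = (j \in S) -> t S = 0) -> \sum_S t S = 0.
Proof.
move=> ht h0.
have sp : forall S : {set 'I_n}, t S = (if (i \in S) && (j \notin S) then t S else 0)
                        + (if (i \notin S) && (j \in S) then t S else 0).
  move=> S; case: (boolP (i \in S)) => iS; case: (boolP (j \in S)) => jS /=;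
    rewrite ?addr0 ?add0r //; apply: h0;
    by [rewrite iS jS | rewrite (negbTE iS) (negbTE jS)].
rewrite (eq_bigr _ (fun S _ => sp S)) big_split -!big_mkcond /=.
have inj : injective (fun S : {set 'I_n} => tperm i j @^-1: S).
  apply: (can_inj (g := fun S : {set 'I_n} => tperm i j @^-1: S)) => S.
  by apply/setP => k; rewrite !inE tpermK.
rewrite [X in _ + X](reindex_inj inj) /=.
have -> : \sum_(S : {set 'I_n} | (i \notin tperm i j @^-1: S) && (j \in tperm i j @^-1: S))
     t (tperm i j @^-1: S) = \sum_(S : {set 'I_n} | (i \in S) && (j \notin S)) t (tperm i j @^-1: S).
  by apply: eq_bigl => S; rewrite !inE tpermL tpermR andbC.
by rewrite (eq_bigr _ (fun S _ => ht S)) sumrN addrN.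
Qed.

Theorem proposition14p4 (R : comNzRingType) (V : lmodType R)
  (Hsep : dual_separates V)
  (P : {linear V -> V}) (b : nat) (D : fn V -> fn V)
  (HX : is_vector_field b D)
  (B : ('I_b -> V) -> V) (HB : is_BX D B) :
  valternating (Phi P B) /\ vmultilinear (Phi P B).
Proof.
split.
  move=> E i j ij Eij; rewrite /Phi; apply: (sum_pair (i := i) (j := j)).
    move=> S; rewrite card_preimset; last exact: perm_inj.
    set G := fun k => if k \in S then P (E k) else E k.
    have -> : (fun k => if k \in tperm i j @^-1: S then P (E k) else E k)
              = (fun k => G (tperm i j k)).
      apply: functional_extensionality => k; rewrite inE /G.
      by case: tpermP => [-> | -> | _ _] //; rewrite Eij.
    by rewrite (B_swap Hsep HX HB) // iterN scalerN.
  move=> S hS.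
  rewrite (B_alt Hsep HX HB (i := i) (j := j)) ?iter0 ?scaler0 //.
  by rewrite hS Eij.
move=> E i a u v; rewrite /Phi.
set c := fun l => - ((-1) ^+ b.+1 * (-1) ^+ (b - i.+1) * aX D a l).
pose G (S : {set 'I_b}) (F : 'I_b -> V) := fun k => if k \in S then P (F k) else F k.
pose r (S : {set 'I_b}) := (-1) ^+ (b - #|S|) *: (c (tup_del (G S E) i)
              *: iter (b - #|S|) P (if i \in S then P u else u)).
have eqG : forall (S : {set 'I_b}) z, (fun k => if k \in S then P (upd E i z k) else upd E i z k)
   = upd (G S E) i (if i \in S then P z else z).
  move=> S z; apply: functional_extensionality => k; rewrite /G /upd.
  by case: eqVneq => [-> |].
have claim : forall S : {set 'I_b},
  (-1) ^+ (b - #|S|) *: iter (b - #|S|) P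
     (B (fun k => if k \in S then P (upd E i (a *: u + v) k) else upd E i (a *: u + v) k))
  = a *: ((-1) ^+ (b - #|S|) *: iter (b - #|S|) P
     (B (fun k => if k \in S then P (upd E i u k) else upd E i u k)))
    + (-1) ^+ (b - #|S|) *: iter (b - #|S|) P
     (B (fun k => if k \in S then P (upd E i v k) else upd E i v k))
    + r S.
  move=> S; rewrite !eqG.
  have -> : (if i \in S then P (a *: u + v) else a *: u + v)
     = a *: (if i \in S then P u else u) + (if i \in S then P v else v).
    by case: (i \in S); rewrite ?linearP.
  rewrite (B_lin Hsep HX HB) !iter_add !iterZ !scalerDr /r /c.
  by rewrite !scalerA (mulrC a).
rewrite (eq_bigr _ (fun S _ => claim S)) !big_split /= -scaler_sumr.
rewrite [X in _ + X](_ : _ = 0) ?addr0 //.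
pose sg (S : {set 'I_b}) := if i \in S then S :\ i else i |: S.
have sgK : involutive sg.
  move=> S; rewrite /sg; case: (boolP (i \in S)) => iS.
    by rewrite !inE eqxx /= setD1K.
  by rewrite setU11 setU1K.
rewrite (bigID (fun S : {set 'I_b} => i \in S)) /= (reindex_inj (inv_inj sgK)) /=.
rewrite (eq_bigl (fun S : {set 'I_b} => i \notin S)); last first.
  move=> S; rewrite /sg; case: (boolP (i \in S)) => iS.
    by rewrite !inE eqxx.
  by rewrite setU11.
rewrite -big_split big1 // => S iS /=.
rewrite /sg (negbTE iS) /r.
have cS : #|i |: S| = #|S|.+1 by rewrite cardsU1 iS.
have lb : (#|S|.+1 <= b)%N by have := max_card (i |: S); rewrite card_ord cS.
rewrite cS setU11 (negbTE iS).
have -> : tup_del (G (i |: S) E) i = tup_del (G S E) i.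
  apply/eq_in_map => k; rewrite mem_filter => /andP [ki _].
  by rewrite /G in_setU1 (negbTE ki).
rewrite (_ : (b - #|S| = (b - #|S|.+1).+1)%N); last by lia.
by rewrite iterSr exprS mulN1r scaleNr addrN.
Qed.
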